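(* Let $n\geq 2$, $p\geq n+2$, and $$\Omega=\{(x',x_n)\in\mathbb R^{n-1}\times\mathbb R: |x'|<1,\ 0<x_n<\sqrt{1-|x'|^2}\}.$$ Then there is a constant $C>0$ depending only on $n,p$ such that the function $$w(x',x_n)=Cx_n-Cx_n^{\frac{2}{n+p}}(1-|x'|^2)^{\frac{n+p-2}{2(n+p)}}$$ is smooth and convex in $\Omega$ and satisfies $\det D^2 w\leq |w|^{-p}$ in $\Omega$ and $w=0$ on $\partial\Omega$. *)

(* Defs.v *)
From HB Require Import structures.
From mathcomp Require Import all_boot all_order all_algebra.
From mathcomp Require Import all_classical all_reals all_analysis.
Set Implicit Arguments. Unset Strict Implicit. Unset Printing Implicit Defensive.
Import Order.TTheory GRing.Theory Num.Theory.
Import numFieldNormedType.Exports.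
Local Open Scope classical_set_scope.
Local Open Scope ring_scope.

(* Points of R^{n-1} x R are row vectors of length (n-1)+1;
   x' = lsubmx x, x_n = rsubmx x 0 0. *)
Section Defs.
Variable R : realType.

Definition xprime (n : nat) (x : 'rV[R]_(n.-1 + 1)) : 'rV[R]_(n.-1) := lsubmx x.
Definition xlast (n : nat) (x : 'rV[R]_(n.-1 + 1)) : R := rsubmx x 0 0.

Definition sqnorm (m : nat) (y : 'rV[R]_m) : R := \sum_(i < m) y 0 i ^+ 2.

Definition Omega (n : nat) : set 'rV[R]_(n.-1 + 1) :=
  [set x | sqnorm (xprime x) < 1 /\ 0 < xlast x /\
           xlast x < Num.sqrt (1 - sqnorm (xprime x))].

Definition wfun (n : nat) (p C : R) (x : 'rV[R]_(n.-1 + 1)) : R :=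
  C * xlast x
  - C * powR (xlast x) (2 / (n%:R + p))
      * powR (1 - sqnorm (xprime x)) ((n%:R + p - 2) / (2 * (n%:R + p))).

Fixpoint iterD (m : nat) (vs : seq 'rV[R]_m) (f : 'rV[R]_m -> R) : 'rV[R]_m -> R :=
  match vs with
  | [::] => f
  | v :: vs' => 'D_v (iterD vs' f)
  end.

Definition smooth_on (m : nat) (A : set 'rV[R]_m) (f : 'rV[R]_m -> R) : Prop :=
  forall (vs : seq 'rV[R]_m) (x : 'rV[R]_m), A x -> differentiable (iterD vs f) x.

Definition convex_on (m : nat) (A : set 'rV[R]_m) (f : 'rV[R]_m -> R) : Prop :=
  forall x y : 'rV[R]_m, A x -> A y -> forall t : R, 0 <= t <= 1 ->
    f ((1 - t) *: x + t *: y) <= (1 - t) * f x + t * f y.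

Definition hessian (m : nat) (f : 'rV[R]_m -> R) (x : 'rV[R]_m) : 'M[R]_m :=
  \matrix_(i < m, j < m) 'D_(delta_mx 0 i) ('D_(delta_mx 0 j) f) x.

End Defs.

(* Main.v *)
Require Import Defs.
From HB Require Import structures.
From mathcomp Require Import all_boot all_order all_algebra.
From mathcomp Require Import all_classical all_reals all_analysis.
From mathcomp Require Import ring lra.
Import Order.TTheory GRing.Theory Num.Theory.
Import numFieldNormedType.Exports.
Local Open Scope classical_set_scope.
Local Open Scope ring_scope.
Section Gen.
Variable R : realType.

Lemma chainR (V : normedModType R) (f : V -> R) (g : R -> R) x v :
  differentiable f x -> differentiable g (f x) ->
  differentiable (g \o f) x /\ 'D_v (g \o f) x = 'D_v f x * g^`()%classic (f x).
Proof.
move=> df dg; split; first exact: differentiable_comp.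
rewrite deriveE; last exact: differentiable_comp.
by rewrite diff_comp // /= diff1E // -deriveE.
Qed.

Lemma near_eq_differentiable (V W : normedModType R) (f g : V -> W) x :
  (\forall y \near x, f y = g y) -> differentiable f x -> differentiable g x.
Proof.
move=> fg df.
have fx : f x = g x := nbhs_singleton fg.
have H : g \o shift x = cst (g x) + 'd f x +o_ 0 id.
  apply/eqaddoP => eps eps0.
  have := diff_locally df => /eqaddoP/(_ eps eps0).
  have fg0 : \forall h \near (0 : V), f (h + x) = g (h + x).
    move: fg; rewrite (near_shift 0) /=.
    by apply: filterS => h; rewrite /= subr0.
  apply: filterS2 fg0 => h fgh.
  rewrite /=; move=> Hf; rewrite -fx; apply: le_trans Hf; by rewrite !fctE /= fgh.
have dE : 'd g x = 'd f x :> (V -> W).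
  exact: (diff_unique (diff_continuous df) H).
apply/diff_locallyP; rewrite dE; split => //; exact: diff_continuous.
Qed.

Lemma derive_coord m (x v : 'rV[R]_m) (j : 'I_m) :
  'D_v (fun y : 'rV[R]_m => y 0 j) x = v 0 j.
Proof.
have := @derive_mx R _ 1 m id x v (@derivable_id _ _ x v).
rewrite derive_id => /(congr1 (fun M : 'rV[R]_m => M 0 j)).
by rewrite mxE.
Qed.

End Gen.
Arguments chainR {R V f g x} v.
Arguments near_eq_differentiable {R V W f g x}.
Section Det.
Variable F : fieldType.

Lemma det_rank1 m (u v : 'rV[F]_m) : \det (1%:M + u^T *m v) = 1 + (v *m u^T) 0 0.
Proof.
pose N := block_mx (1%:M : 'M[F]_m) (- u^T) v (1%:M : 'M[F]_1).
have h1 : block_mx 1%:M u^T 0 1%:M *m N = block_mx (1%:M + u^T *m v) 0 v 1%:M.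
  by rewrite mulmx_block !mul1mx !mulmx1 !mul0mx !add0r addNr.
have h2 : block_mx 1%:M 0 (- v) 1%:M *m N = block_mx 1%:M (- u^T) 0 (1%:M + v *m u^T).
  by rewrite mulmx_block !mul1mx !mulmx1 !mul0mx !addr0 mulNmx mulmxN opprK addNr addrC.
have := congr1 determinant h1; rewrite det_mulmx det_ublock det_lblock !det1 !mul1r mulr1 => <-.
have := congr1 determinant h2; rewrite det_mulmx det_ublock det_lblock !det1 !mul1r => ->.
by rewrite det_mx11 !mxE.
Qed.

Lemma det_H m (lam mu c d : F) (y : 'rV[F]_m) : lam != 0 -> d != 0 ->
  \det (block_mx (lam%:M + mu *: (y^T *m y)) (c *: y^T) (c *: y) d%:M)
  = lam ^+ m * (d + (d * mu - c ^+ 2) / lam * (y *m y^T) 0 0).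
Proof.
move=> l0 d0.
pose K := block_mx (1%:M : 'M[F]_m) (- (c / d) *: y^T) 0 (1%:M : 'M[F]_1).
pose kap := (mu - c ^+ 2 / d) / lam.
have hK : K *m block_mx (lam%:M + mu *: (y^T *m y)) (c *: y^T) (c *: y) d%:M
   = block_mx (lam *: (1%:M + (kap *: y)^T *m y)) 0 (c *: y) d%:M.
  rewrite mulmx_block !mul1mx !mul0mx !add0r; congr block_mx.
  - have -> : (kap *: y)^T = kap *: y^T by apply/matrixP => i j; rewrite !mxE.
    rewrite -!scalemxAl -scalemxAr !scalerA scalerDr scalemx1 scalerA -addrA -scalerDl; congr (_ + _ *: _).
    rewrite /kap; field; exact/andP.
  - rewrite mul_mx_scalar scalerA -scalerDl.
    have -> : c + d * - (c / d) = 0 by field.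
    by rewrite scale0r.
have := congr1 determinant hK.
rewrite det_mulmx det_ublock det_lblock !det1 !mul1r detZ det_rank1 det_scalar1 => ->.
have -> : (kap *: y)^T = kap *: y^T by apply/matrixP => i j; rewrite !mxE.
rewrite -scalemxAr mxE /kap; field; exact/andP.
Qed.

End Det.
Section Expr.
Variables (R : realType) (m : nat).
Local Notation V := 'rV[R]_(m + 1).

Definition ilast : 'I_(m + 1) := rshift m ord0.
Definition Tf (x : V) : R := x 0 ilast.
Definition Qf (x : V) : R := 1 - \sum_(i < m) x 0 (lshift 1 i) ^+ 2.
Definition crd (i : 'I_(m + 1)) (x : V) : R := x 0 i.

Lemma crd_diff i x : differentiable (crd i) x.
Proof. exact: differentiable_coord. Qed.

Lemma crd_D i x v : 'D_v (crd i) x = v 0 i.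
Proof. exact: derive_coord. Qed.

Lemma Qf_eq : Qf = cst 1 - \sum_(i < m) (crd (lshift 1 i)) ^+ 2.
Proof.
apply/funext => y; rewrite /Qf !fctE fct_sumE; congr (_ - _).
Qed.

Lemma Qf_diff x : differentiable Qf x.
Proof.
rewrite Qf_eq; apply: differentiableB => //.
apply: differentiable_sum => i; apply: differentiableX; exact: crd_diff.
Qed.

Lemma Qf_D x v : 'D_v Qf x = \sum_(i < m) (-2 * v 0 (lshift 1 i)) * x 0 (lshift 1 i).
Proof.
rewrite Qf_eq deriveB //; last first.
  apply: diff_derivable; apply: differentiable_sum => i; apply: differentiableX.
  exact: crd_diff.
rewrite derive_cst sub0r derive_sum; last first.
  by move=> i; apply: diff_derivable; apply: differentiableX; exact: crd_diff.
rewrite -sumrN; apply: eq_bigr => i _.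
rewrite deriveX; last exact: diff_derivable (crd_diff _ _).
rewrite crd_D /crd /= expr1 /GRing.scale /=; ring.
Qed.


Definition Dom (x : V) := 0 < Tf x /\ 0 < Qf x.

Inductive ex : Type :=
  EC of R | EX of 'I_(m + 1) | ET of R | EQ of R | EA of ex & ex | EM of ex & ex.

Fixpoint ev (e : ex) (x : V) : R :=
  match e with
  | EC c => c
  | EX i => x 0 i
  | ET a => powR (Tf x) a
  | EQ b => powR (Qf x) b
  | EA e1 e2 => ev e1 x + ev e2 x
  | EM e1 e2 => ev e1 x * ev e2 x
  end.

Definition dQstep (v : V) (i : 'I_m) (acc : ex) : ex :=
  EA (EM (EC (-2 * v 0 (lshift 1 i))) (EX (lshift 1 i))) acc.

Definition dQe (v : V) : ex := foldr (dQstep v) (EC 0) (index_enum 'I_m).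

Fixpoint dex (v : V) (e : ex) : ex :=
  match e with
  | EC _ => EC 0
  | EX i => EC (v 0 i)
  | ET a => EM (EC (a * Tf v)) (ET (a - 1))
  | EQ b => EM (EM (EC b) (EQ (b - 1))) (dQe v)
  | EA e1 e2 => EA (dex v e1) (dex v e2)
  | EM e1 e2 => EA (EM (dex v e1) e2) (EM e1 (dex v e2))
  end.

Lemma ev_dQe v x :
  ev (dQe v) x = \sum_(i < m) (-2 * v 0 (lshift 1 i)) * x 0 (lshift 1 i).
Proof.
rewrite /dQe; elim: (index_enum 'I_m) => [|i s IH]; first by rewrite big_nil.
by rewrite big_cons /= IH.
Qed.

Lemma ev_ok e x : Dom x ->
  differentiable (ev e) x /\ forall v, 'D_v (ev e) x = ev (dex v e) x.
Proof.
move=> [Tx Qx].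
elim: e => [c|i|a|b|e1 [d1 D1] e2 [d2 D2]|e1 [d1 D1] e2 [d2 D2]].
- split; first exact: (differentiable_cst c).
  by move=> v; rewrite /= (derive_cst c).
- split; first exact: (crd_diff i).
  by move=> v; rewrite /= (crd_D i).
- have dg : differentiable (fun y : R^o => (powR y a : R^o)) (Tf x).
    by apply/derivable1_diffP; apply: derivable_powR; rewrite in_itv /= Tx.
  have [df Df] := chainR (0 : V) (crd_diff ilast x) dg.
  split; first exact: df.
  move=> v; have [_ Df'] := chainR v (crd_diff ilast x) dg.
  rewrite (_ : ev (ET a) = (fun y : R => powR y a) \o crd ilast) //.
  rewrite Df' crd_D powR_derive1; last by rewrite in_itv /= Tx.
  by unfold Tf, crd; rewrite mulrCA mulrA.
- have dg : differentiable (fun y : R^o => (powR y b : R^o)) (Qf x).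
    by apply/derivable1_diffP; apply: derivable_powR; rewrite in_itv /= Qx.
  have [df _] := chainR (0 : V) (Qf_diff x) dg.
  split; first exact: df.
  move=> v; have [_ Df'] := chainR v (Qf_diff x) dg.
  rewrite (_ : ev (EQ b) = (fun y : R => powR y b) \o Qf) //.
  rewrite Df' Qf_D powR_derive1; last by rewrite in_itv /= Qx.
  by rewrite /= ev_dQe mulrC.
- split; first exact: (differentiableD d1 d2).
  move=> v; rewrite /=.
  rewrite (_ : (fun x0 => ev e1 x0 + ev e2 x0) = ev e1 + ev e2) //.
  by rewrite deriveD ?D1 ?D2 //; exact: diff_derivable.
- split; first exact: (differentiableM d1 d2).
  move=> v; rewrite /=.
  rewrite (_ : (fun x0 => ev e1 x0 * ev e2 x0) = ev e1 * ev e2) //.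
  rewrite deriveM ?D1 ?D2 //; try exact: diff_derivable.
  rewrite /GRing.scale /=; ring.
Qed.


Definition ew (a b : R) : ex := EA (EX ilast) (EM (EC (-1)) (EM (ET a) (EQ b))).
Definition SP (u v : V) : R := \sum_(i < m) u 0 (lshift 1 i) * v 0 (lshift 1 i).

Lemma ev_dQe' v x : ev (dQe v) x = -2 * SP v x.
Proof.
rewrite ev_dQe /SP mulr_sumr; apply: eq_bigr => i _; by rewrite mulrA.
Qed.

Lemma ev_dex_dQe u v x : ev (dex u (dQe v)) x = -2 * SP v u.
Proof.
rewrite /SP mulr_sumr /dQe; elim: (index_enum 'I_m) => [|i s IH].
  by rewrite big_nil.
by rewrite big_cons /= IH mul0r add0r mulrA.
Qed.

Lemma powRm1 (t c : R) : 0 < t -> powR t (c - 1) = powR t c / t.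
Proof.
move=> t0; rewrite powRB ?powRr1 ?ltW //.
by apply/implyP => _; rewrite gt_eqF.
Qed.

Lemma D2_formula a b u v x : Dom x ->
  ev (dex u (dex v (ew a b))) x = - (powR (Tf x) a * powR (Qf x) b) *
   (a * (a - 1) * Tf u * Tf v / (Tf x) ^+ 2
    - 2 * a * b * (Tf v * SP x u + Tf u * SP x v) / (Tf x * Qf x)
    + 4 * b * (b - 1) * SP x u * SP x v / (Qf x) ^+ 2
    - 2 * b * SP u v / Qf x).
Proof.
move=> [Tx Qx].
rewrite /= !ev_dQe' !ev_dex_dQe !powRm1 //.
have -> : SP v x = SP x v by rewrite /SP; apply: eq_bigr => i _; rewrite mulrC.
have -> : SP u x = SP x u by rewrite /SP; apply: eq_bigr => i _; rewrite mulrC.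
have -> : SP v u = SP u v by rewrite /SP; apply: eq_bigr => i _; rewrite mulrC.
field; apply/andP; split; rewrite gt_eqF //.
Qed.

End Expr.
Arguments ilast {m}.
Arguments Tf {R m}.
Arguments Qf {R m}.
Arguments crd {R m}.
Arguments Dom {R m}.
Arguments ev {R m}.
Arguments dex {R m}.
Arguments dQe {R m}.
Arguments ew {R m}.
Arguments SP {R m}.
Arguments ev_ok {R m}.
Arguments D2_formula {R m}.
Arguments Qf_diff {R m}.
Arguments crd_diff {R m}.
Section Delta.
Variables (R : realType) (m : nat).
Local Notation V := 'rV[R]_(m + 1).

Lemma lr_neqk (i : 'I_m) (k : 'I_1) : (lshift 1 i == rshift m k) = false.
Proof. by rewrite -val_eqE /=; case: k => [[|k'] //= _]; rewrite addn0 ltn_eqF. Qed.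

Lemma lr_neq (i : 'I_m) : (lshift 1 i == ilast) = false.
Proof. exact: lr_neqk. Qed.

Lemma Tf_dl (i : 'I_m) : Tf (delta_mx 0 (lshift 1 i) : V) = 0.
Proof. by rewrite /Tf mxE eq_sym lr_neq andbF. Qed.

Lemma Tf_dr (k : 'I_1) : Tf (delta_mx 0 (rshift m k) : V) = 1.
Proof.
rewrite /Tf mxE eqxx /=; case: k => [[|k'] //= ?].
by rewrite (_ : Ordinal _ = ord0) ?eqxx //; apply/val_inj.
Qed.

Lemma SP_sym (u v : V) : SP u v = SP v u.
Proof. by rewrite /SP; apply: eq_bigr => i _; rewrite mulrC. Qed.

Lemma SP_dl (z : V) (i : 'I_m) : SP z (delta_mx 0 (lshift 1 i)) = z 0 (lshift 1 i).
Proof.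
rewrite /SP (bigD1 i) //= !mxE !eqxx /= mulr1 big1 ?addr0 // => k nki.
by rewrite !mxE /= (inj_eq (@lshift_inj _ _)) (negbTE nki) mulr0.
Qed.

Lemma SP_dr (z : V) (k : 'I_1) : SP z (delta_mx 0 (rshift m k)) = 0.
Proof. by rewrite /SP big1 // => l _; rewrite !mxE lr_neqk andbF mulr0. Qed.

Lemma SP_dd (i j : 'I_m) :
  SP (delta_mx 0 (lshift 1 i) : V) (delta_mx 0 (lshift 1 j)) = (j == i)%:R.
Proof. by rewrite SP_dl mxE /= (inj_eq (@lshift_inj _ _)). Qed.

End Delta.
Section Main.
Variables (R : realType) (n : nat) (p : R).
Hypotheses (hn : (2 <= n)%N) (hp : n%:R + 2 <= p).
Local Notation V := 'rV[R]_(n.-1 + 1).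

Definition aa : R := 2 / (n%:R + p).
Definition bb : R := (n%:R + p - 2) / (2 * (n%:R + p)).
Local Notation wf := (@wfun R n p 1).

Lemma Npos : 0 < n%:R + p.
Proof. have : 0 <= n%:R :> R by rewrite ler0n.
have hp' := hp; move=> ?; lra. Qed.

Lemma aa_pos : 0 < aa.
Proof. by rewrite /aa divr_gt0 // Npos. Qed.

Lemma bb_pos : 0 < bb.
Proof.
rewrite /bb divr_gt0 //; last by rewrite mulr_gt0 // Npos.
have : (2:R) <= n%:R by rewrite (ler_nat R 2 n).
have hp' := hp; move=> ?; lra.
Qed.

Lemma ab1 : aa + 2 * bb = 1.
Proof. rewrite /aa /bb; field; by rewrite gt_eqF // Npos. Qed.

Lemma xlastE (x : V) : xlast x = Tf x.
Proof. by rewrite /xlast /Tf mxE. Qed.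

Lemma QfE (x : V) : 1 - sqnorm (xprime x) = Qf x.
Proof. by rewrite /sqnorm /xprime /Qf; congr (_ - _); apply: eq_bigr => i _; rewrite mxE. Qed.

Lemma wfunE (x : V) : wf x = ev (ew aa bb) x.
Proof. rewrite /wfun xlastE QfE /= /Tf /aa /bb; ring. Qed.

Lemma OmegaE (x : V) : Omega x <-> 0 < Tf x /\ Tf x ^+ 2 < Qf x.
Proof.
rewrite /Omega /= xlastE -QfE.
set Q := 1 - _.
have sQ : 0 <= Num.sqrt Q := sqrtr_ge0 Q.
split.
- move=> [s1 [t0 tq]]; split => //.
  have Q0 : 0 <= Q by rewrite /Q subr_ge0 ltW.
  have sq := sqr_sqrtr Q0.
  have h1 : 0 < (Num.sqrt Q - Tf x) * (Num.sqrt Q + Tf x) by apply: mulr_gt0; lra.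
  nra.
- move=> [t0 tq].
  have Q0 : 0 <= Q by nra.
  have sq := sqr_sqrtr Q0.
  split; first by rewrite /Q in Q0 tq *; nra.
  split => //.
  rewrite ltNge; apply/negP => h.
  have h1 : 0 <= (Tf x - Num.sqrt Q) * (Tf x + Num.sqrt Q) by apply: mulr_ge0; lra.
  nra.
Qed.

Lemma Omega_Dom (x : V) : Omega x -> Dom x.
Proof. move=> /OmegaE [t0 tq]; split => //; nra. Qed.

Lemma Omega_open : open (@Omega R n).
Proof.
have -> : @Omega R n = (@Tf R n.-1) @^-1` [set y | 0 < y] `&`
    (Qf - (@crd R n.-1 ilast) ^+ 2) @^-1` [set y | 0 < y].
  apply/seteqP; split => x /=; rewrite OmegaE !fctE subr_gt0 //.
apply: openI; apply: open_comp; try exact: open_gt.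
- move=> y _; apply: differentiable_continuous; exact: crd_diff.
- move=> y _; apply: differentiable_continuous.
  apply: differentiableB; first exact: Qf_diff.
  apply: differentiableX; exact: crd_diff.
Qed.

Lemma near_Omega (x : V) : Omega x -> \forall y \near x, Omega y.
Proof. by move=> Ox; move: Omega_open; rewrite openE => /(_ x Ox). Qed.

Lemma iterD_ev vs (x : V) : Omega x -> Defs.iterD vs wf x = ev (foldr dex (ew aa bb) vs) x.
Proof.
elim: vs x => [|v vs IH] x Ox /=; first exact: wfunE.
have -> : 'D_v (Defs.iterD vs wf) x = 'D_v (ev (foldr dex (ew aa bb) vs)) x.
  by apply: near_eq_derive; move: (near_Omega x Ox); apply: filterS => y Oy; exact: IH.
by have [_ ->] := ev_ok (foldr dex (ew aa bb) vs) x (Omega_Dom x Ox).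
Qed.

Lemma wf_smooth : smooth_on (@Omega R n) wf.
Proof.
move=> vs x Ox.
apply: (near_eq_differentiable (f := ev (foldr dex (ew aa bb) vs))).
  by move: (near_Omega x Ox); apply: filterS => y Oy; rewrite iterD_ev.
by have [] := ev_ok (foldr dex (ew aa bb) vs) x (Omega_Dom x Ox).
Qed.


Definition Pv (x : V) : R := powR (Tf x) aa * powR (Qf x) bb.
Definition lamv (x : V) : R := 2 * bb * Pv x / Qf x.
Definition muv (x : V) : R := 4 * bb * (1 - bb) * Pv x / Qf x ^+ 2.
Definition cv (x : V) : R := 2 * aa * bb * Pv x / (Tf x * Qf x).
Definition dv (x : V) : R := aa * (1 - aa) * Pv x / Tf x ^+ 2.

Lemma hessE (x : V) : Omega x -> hessian wf x =
  block_mx ((lamv x)%:M + muv x *: ((xprime x)^T *m xprime x))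
           (cv x *: (xprime x)^T) (cv x *: xprime x) (dv x)%:M.
Proof.
move=> Ox; have [Tx Qx] := Omega_Dom x Ox.
apply/matrixP => i j; rewrite mxE.
transitivity (Defs.iterD [:: delta_mx 0 i; delta_mx 0 j] wf x); first by [].
rewrite iterD_ev //.
rewrite D2_formula; last by split.
rewrite -[i]splitK -[j]splitK; case: (fintype.split i) => i'; case: (fintype.split j) => j' /=.
- rewrite block_mxEul !Tf_dl SP_dl SP_dl SP_dd !mxE big_ord1 !mxE.
  have E : forall k, x ord0 k = x 0 k by [].
  rewrite !E /lamv /muv /Pv.
  by case: (eqVneq i' j') => [<-|ne]; rewrite ?eqxx ?mulr1n ?mulr0n; field;
    rewrite !gt_eqF.
- rewrite block_mxEur Tf_dl Tf_dr SP_dl SP_dr SP_dr !mxE (ord1 j') /cv /Pv.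
  by field; rewrite !gt_eqF.
- rewrite block_mxEdl Tf_dl Tf_dr SP_dl SP_dr SP_sym SP_dr !mxE (ord1 i') /cv /Pv.
  by field; rewrite !gt_eqF.
- rewrite block_mxEdr !Tf_dr !SP_dr !mxE (ord1 i') (ord1 j') eqxx mulr1n /dv /Pv.
  by field; rewrite !gt_eqF.
Qed.



Lemma Qf_le1 (x : V) : Qf x <= 1.
Proof.
rewrite /Qf lerBlDr lerDl; apply: sumr_ge0 => i _; exact: sqr_ge0.
Qed.

Lemma yyT (x : V) : (xprime x *m (xprime x)^T) 0 0 = 1 - Qf x.
Proof.
rewrite mxE /Qf opprB addrC subrK; apply: eq_bigr => i _.
by rewrite !mxE expr2.
Qed.

Lemma alg_det (a b P t q : R) (m : nat) : t != 0 -> q != 0 -> b != 0 -> P != 0 ->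
  a = 1 - 2 * b ->
  (2 * b * P / q) ^+ m * (a * (1 - a) * P / t ^+ 2 +
    (a * (1 - a) * P / t ^+ 2 * (4 * b * (1 - b) * P / q ^+ 2)
     - (2 * a * b * P / (t * q)) ^+ 2) / (2 * b * P / q) * (1 - q))
  = a * (2 * b) ^+ m.+1 * P ^+ m.+1 / (t ^+ 2 * q ^+ m.+1).
Proof.
move=> t0 q0 b0 P0 ->.
rewrite !expr_div_n !exprMn !exprS; field.
by rewrite expf_neq0 // q0 t0 P0 b0.
Qed.

Lemma det_ineq (x : V) : Omega x -> \det (hessian wf x) <= powR `|wf x| (- p).
Proof.
move=> Ox; have [Tx Qx] := Omega_Dom x Ox.
have [_ tq] := (OmegaE x).1 Ox.
have q1 := Qf_le1 x.
have a0 := aa_pos; have b0 := bb_pos; have e1 := ab1.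
have hp' := hp.
set t := Tf x in Tx tq *; set q := Qf x in Qx tq q1 *.
pose A := powR t aa; pose B := powR q bb; pose K := powR (t ^+ 2) bb.
have A0 : 0 < A by apply: powR_gt0.
have B0 : 0 < B by apply: powR_gt0.
have K0 : 0 < K by apply: powR_gt0; exact: exprn_gt0.
have KB : K < B.
  by apply: gt0_ltr_powR => //; rewrite ?nnegrE ?exprn_ge0 ?ltW.
have AK : A * K = t.
  rewrite /K /A -(powR_mulrn 2 (ltW Tx)) -powRrM -powRD; last first.
    by apply/implyP => _; rewrite gt_eqF.
  have e1' : aa + 2%:R * bb = 1 := e1.
  by rewrite e1' powRr1 // ltW.
have PE : Pv x = A * B by [].
have Pt : t < A * B by rewrite -AK ltr_pM2l.
have wE : wf x = t - A * B.
  rewrite wfunE /=; change (x 0 ilast) with t; rewrite /A /B; ring.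
rewrite hessE // det_H; last 2 first.
- have two : (0:R) < 2 by lra.
  by rewrite gt_eqF // /lamv PE (divr_gt0 (mulr_gt0 (mulr_gt0 two b0) (mulr_gt0 A0 B0)) Qx).
- have a1 : (0:R) < 1 - aa by lra.
  by rewrite gt_eqF // /dv PE (divr_gt0 (mulr_gt0 (mulr_gt0 a0 a1) (mulr_gt0 A0 B0)) (exprn_gt0 2 Tx)).
rewrite yyT -/q.
rewrite /lamv /dv /muv /cv PE -/t -/q alg_det; last 5 first.
- by rewrite gt_eqF.
- by rewrite gt_eqF.
- by rewrite gt_eqF.
- by rewrite gt_eqF // mulr_gt0.
- lra.
rewrite prednK; last exact: ltnW.
rewrite wE ltr0_norm ?subr_lt0 // opprB powRN.
have PP : (A * B) ^+ n * powR (A * B) p <= t ^+ 2 * q ^+ n.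
  rewrite -(powR_mulrn n (ltW (mulr_gt0 A0 B0))) -powRD; last first.
    by apply/implyP => _; rewrite gt_eqF // mulr_gt0.
  rewrite (powRM _ (ltW A0) (ltW B0)) /A /B -!powRrM.
  have -> : aa * (n%:R + p) = 2%:R by rewrite /aa; field; rewrite gt_eqF // Npos.
  rewrite (powR_mulrn 2 (ltW Tx)) ler_pM2l ?exprn_gt0 //.
  rewrite -(powR_mulrn n (ltW Qx)); apply: ger_powR; first by rewrite Qx q1.
  rewrite /bb (_ : _ / _ * _ = (n%:R + p - 2) / 2); last first.
    by field; rewrite gt_eqF // Npos.
  lra.
have pP : 0 < powR (A * B) p by apply: powR_gt0; rewrite mulr_gt0.
have pPt : 0 < powR (A * B - t) p by apply: powR_gt0; rewrite subr_gt0.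
have ple : powR (A * B - t) p <= powR (A * B) p.
  apply: ge0_ler_powR; rewrite ?nnegrE ?subr_ge0 ?ltW ?mulr_gt0 //.
  - have : 0 <= n%:R :> R by rewrite ler0n. lra.
  - lra.
apply: (@le_trans _ _ (powR (A * B) p)^-1); last first.
  by rewrite lef_pV2 // ?posrE.
rewrite -[X in _ <= X]mul1r ler_pdivlMr //.
have inner : (A * B) ^+ n * powR (A * B) p / (t ^+ 2 * q ^+ n) <= 1.
  by rewrite ler_pdivrMr ?mulr_gt0 ?exprn_gt0 // mul1r.
have c1 : aa * (2 * bb) ^+ n <= 1.
  rewrite -[1]mul1r; apply: ler_pM.
  - exact: ltW.
  - by apply: exprn_ge0; lra.
  - lra.
  - apply: exprn_ile1; lra.
have c0 : 0 <= aa * (2 * bb) ^+ n.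
  by apply: mulr_ge0; [exact: ltW | apply: exprn_ge0; lra].
rewrite (_ : aa * (2 * bb) ^+ n * (A * B) ^+ n / (t ^+ 2 * q ^+ n) * (A * B) `^ p
   = aa * (2 * bb) ^+ n * ((A * B) ^+ n * powR (A * B) p / (t ^+ 2 * q ^+ n))); last by ring.
apply: le_trans c1; rewrite -[X in _ <= X]mulr1.
by apply: ler_wpM2l.
Qed.


Lemma geo_concave (a c l t1 t2 s1 s2 : R) : 0 < a -> 0 < c -> a + c = 1 ->
  0 <= l -> l <= 1 -> 0 < t1 -> 0 < t2 -> 0 < s1 -> 0 < s2 ->
  (1 - l) * (powR t1 a * powR s1 c) + l * (powR t2 a * powR s2 c)
  <= powR ((1 - l) * t1 + l * t2) a * powR ((1 - l) * s1 + l * s2) c.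
Proof.
move=> a0 c0 ac l0 l1 t10 t20 s10 s20.
set T := (1 - l) * t1 + l * t2; set S := (1 - l) * s1 + l * s2.
have T0 : 0 < T by rewrite /T; nra.
have S0 : 0 < S by rewrite /S; nra.
have key : forall ti si, 0 < ti -> 0 < si ->
    powR ti a * powR si c <= powR T a * powR S c * (a * (ti / T) + c * (si / S)).
  move=> ti si ti0 si0.
  have Ea : powR ti a = powR (ti / T) a * powR T a.
    by rewrite -powRM ?divr_ge0 ?ltW // divfK // gt_eqF.
  have Ec : powR si c = powR (si / S) c * powR S c.
    by rewrite -powRM ?divr_ge0 ?ltW // divfK // gt_eqF.
  rewrite Ea Ec.
  have ha : 0 < a^-1 by rewrite invr_gt0.
  have hc : 0 < c^-1 by rewrite invr_gt0.
  have hac : a^-1^-1 + c^-1^-1 = 1 by rewrite !invrK.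
  have Y := @conjugate_powR R (powR (ti / T) a) (powR (si / S) c) a^-1 c^-1
    (powR_ge0 _ _) (powR_ge0 _ _) ha hc hac.
  have tT : 0 <= ti / T by apply: divr_ge0; apply: ltW.
  have sS : 0 <= si / S by apply: divr_ge0; apply: ltW.
  have E1 : powR (powR (ti / T) a) a^-1 / a^-1 = a * (ti / T).
    by rewrite -powRrM mulfV ?gt_eqF // powRr1 // invrK mulrC.
  have E2 : powR (powR (si / S) c) c^-1 / c^-1 = c * (si / S).
    by rewrite -powRrM mulfV ?gt_eqF // powRr1 // invrK mulrC.
  rewrite E1 E2 in Y.
  rewrite (_ : powR (ti / T) a * powR T a * (powR (si / S) c * powR S c)
     = powR T a * powR S c * (powR (ti / T) a * powR (si / S) c)); last by ring.
  apply: ler_wpM2l; first by rewrite mulr_ge0 ?powR_ge0.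
  exact: Y.
apply: (@le_trans _ _ ((1 - l) * (powR T a * powR S c * (a * (t1 / T) + c * (s1 / S)))
     + l * (powR T a * powR S c * (a * (t2 / T) + c * (s2 / S))))).
  apply: lerD; apply: ler_wpM2l; rewrite ?subr_ge0 //; exact: key.
rewrite (_ : (1 - l) * (powR T a * powR S c * (a * (t1 / T) + c * (s1 / S)))
     + l * (powR T a * powR S c * (a * (t2 / T) + c * (s2 / S))) = powR T a * powR S c * (a * (((1 - l) * t1 + l * t2) / T)
     + c * (((1 - l) * s1 + l * s2) / S))); last by field; rewrite !gt_eqF.
by rewrite -/T -/S !divff ?gt_eqF // !mulr1 ac mulr1.
Qed.


Lemma wfE' (x : V) : wf x = Tf x - powR (Tf x) aa * powR (Qf x) bb.
Proof. by rewrite wfunE /= /Tf; ring. Qed.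

Lemma Qf_comb (x y : V) (l : R) : 0 <= l -> l <= 1 -> 0 <= Qf x -> 0 <= Qf y ->
  ((1 - l) * Num.sqrt (Qf x) + l * Num.sqrt (Qf y)) ^+ 2 <= Qf ((1 - l) *: x + l *: y).
Proof.
move=> l0 l1 qx qy.
pose X := \sum_(i < n.-1) x 0 (lshift 1 i) ^+ 2.
pose Y := \sum_(i < n.-1) y 0 (lshift 1 i) ^+ 2.
pose P := \sum_(i < n.-1) x 0 (lshift 1 i) * y 0 (lshift 1 i).
have QZ : Qf ((1 - l) *: x + l *: y) = 1 - ((1 - l) ^+ 2 * X + l ^+ 2 * Y + 2 * l * (1 - l) * P).
  rewrite /Qf; congr (_ - _); rewrite /X /Y /P !mulr_sumr -!big_split /=.
  by apply: eq_bigr => i _; rewrite !mxE; ring.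
have D : 0 <= X + Y - 2 * P.
  have -> : X + Y - 2 * P = \sum_(i < n.-1) (x 0 (lshift 1 i) - y 0 (lshift 1 i)) ^+ 2.
    rewrite /X /Y /P mulr_sumr -big_split /= -sumrN -big_split /=.
    by apply: eq_bigr => i _; ring.
  by apply: sumr_ge0 => i _; exact: sqr_ge0.
have sx := sqr_sqrtr qx; have sy := sqr_sqrtr qy.
have sx0 := sqrtr_ge0 (Qf x); have sy0 := sqrtr_ge0 (Qf y).
have QX : Qf x = 1 - X by []. have QY : Qf y = 1 - Y by [].
rewrite QZ.
set a := Num.sqrt (Qf x) in sx sx0 *; set b := Num.sqrt (Qf y) in sy sy0 *.
have h : 0 <= (l * (1 - l)) * ((a - b) ^+ 2 + (X + Y - 2 * P)).
  apply: mulr_ge0; first by apply: mulr_ge0; lra.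
  by apply: addr_ge0 => //; exact: sqr_ge0.
rewrite QX in sx; rewrite QY in sy.
nra.
Qed.

Lemma wf_convex : convex_on (@Omega R n) wf.
Proof.
move=> x y Ox Oy l /andP [l0 l1].
have [Tx Qx] := Omega_Dom x Ox; have [Ty Qy] := Omega_Dom y Oy.
have a0 := aa_pos; have b0 := bb_pos; have e1 := ab1.
have Tz : Tf ((1 - l) *: x + l *: y) = (1 - l) * Tf x + l * Tf y by rewrite /Tf !mxE.
rewrite !wfE' Tz.
set sx := Num.sqrt (Qf x); set sy := Num.sqrt (Qf y).
have sx0 : 0 < sx by rewrite sqrtr_gt0.
have sy0 : 0 < sy by rewrite sqrtr_gt0.
have pw : forall q, 0 < q -> powR q bb = powR (Num.sqrt q) (2 * bb).
  move=> q q0; rewrite powRrM (powR_mulrn 2 (sqrtr_ge0 q)) sqr_sqrtr //; exact: ltW.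
have Qc := @Qf_comb x y l l0 l1 (ltW Qx) (ltW Qy).
set S := (1 - l) * sx + l * sy in Qc.
have S0 : 0 <= S by rewrite /S; nra.
have Pz : powR ((1 - l) * Tf x + l * Tf y) aa * powR S (2 * bb) <=
          powR ((1 - l) * Tf x + l * Tf y) aa * powR (Qf ((1 - l) *: x + l *: y)) bb.
  apply: ler_wpM2l; first exact: powR_ge0.
  rewrite powRrM (powR_mulrn 2 S0); apply: ge0_ler_powR => //; first exact: ltW.
  - by rewrite nnegrE exprn_ge0.
  - by rewrite nnegrE (le_trans _ Qc) // exprn_ge0.
have G := @geo_concave aa (2 * bb) l (Tf x) (Tf y) sx sy a0 (mulr_gt0 (ltr0Sn _ 1) b0) e1 l0 l1 Tx Ty sx0 sy0.
rewrite -/S -(pw _ Qx) -(pw _ Qy) in G.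
lra.
Qed.


Lemma AK_lemma (t : R) : 0 < t -> powR t aa * powR (t ^+ 2) bb = t.
Proof.
move=> Tx; have e1 := ab1.
rewrite -(powR_mulrn 2 (ltW Tx)) -powRrM -powRD; last first.
  by apply/implyP => _; rewrite gt_eqF.
have e1' : aa + 2%:R * bb = 1 := e1.
by rewrite e1' powRr1 // ltW.
Qed.

Lemma wf_boundary (x : V) :
  (closure (@Omega R n) `\` (@Omega R n)°) x -> wf x = 0.
Proof.
move=> [cx nix].
have nOx : ~ Omega x.
  by move=> Ox; apply: nix; move: Omega_open; rewrite openE => /(_ x Ox).
pose F := (@Tf R n.-1) @^-1` [set y | 0 <= y] `&`
          (Qf - (@crd R n.-1 ilast) ^+ 2) @^-1` [set y | 0 <= y].
have cF : closed F.
  apply: closedI; apply: preimage_closed; try exact: closed_ge.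
  - move=> y _; apply: differentiable_continuous; exact: crd_diff.
  - move=> y _; apply: differentiable_continuous.
    apply: differentiableB; first exact: Qf_diff.
    apply: differentiableX; exact: crd_diff.
have OF : @Omega R n `<=` F.
  move=> y /OmegaE [t0 tq]; split => /=; first exact: ltW.
  by rewrite !fctE subr_ge0; apply: ltW.
have Fx : F x.
  have := closureS OF cx; rewrite -(closure_id F).1 //.
move: Fx => [/= t0]; rewrite !fctE subr_ge0 => tq.
rewrite wfE'.
case: (eqVneq (Tf x) 0) => [T0 | Tn0].
  by rewrite T0 powR0 ?mul0r ?subrr // gt_eqF // aa_pos.
have Tp : 0 < Tf x by rewrite lt_def Tn0.
have Qe : Qf x = Tf x ^+ 2.
  apply/eqP; rewrite eq_le tq andbT leNgt; apply/negP => lt.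
  by apply: nOx; apply/OmegaE.
by rewrite Qe AK_lemma // subrr.
Qed.

End Main.

Theorem lemma2p7 (R : realType) (n : nat) (p : R)
  (hn : (2 <= n)%N) (hp : n%:R + 2 <= p) :
  exists C : R, 0 < C /\
    smooth_on (@Omega R n) (@wfun R n p C) /\
    convex_on (@Omega R n) (@wfun R n p C) /\
    (forall x, @Omega R n x ->
       \det (hessian (@wfun R n p C) x) <= powR `|@wfun R n p C x| (- p)) /\
    (forall x, (closure (@Omega R n) `\` (@Omega R n)°) x -> @wfun R n p C x = 0).
Proof.
exists 1; split; first exact: ltr01.
split; first by apply: wf_smooth.
split; first by apply: wf_convex.
split; first by move=> x Ox; apply: det_ineq.
by move=> x Bx; apply: wf_boundary.
Qed.
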